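(* Let $\mathfrak g$ be a finite-dimensional complex simple Lie algebra with root system $\Phi$, base $\Pi=\{\alpha_1,\dots,\alpha_n\}$ and Weyl group $W$, and let $\lambda$ be a dominant integral weight. Let $\mathbf P$ be the weight polytope of $\lambda$. Then the set of orbits of the nonempty faces of $\mathbf P$ under the action of $W$ is in bijection with the set of connected subdiagrams of the extended Dynkin diagram that contain the extended node $\{-\lambda\}$.
   Context: Let $E$ be the real span of $\Pi$, equipped with the $W$-invariant inner product $(\cdot,\cdot)$; weights are regarded as elements of $E$. The weight polytope of $\lambda$ is $\mathbf P=\mathrm{conv}(W\lambda)$, the convex hull of the $W$-orbit of $\lambda$ (equivalently, the convex hull of the set of weights of the irreducible highest weight module of highest weight $\lambda$). $W$ acts on the set of faces of $\mathbf P$. The extended Dynkin diagram is the graph obtained from the Dynkin diagram of $\Pi$ (vertices $\alpha_1,\dots,\alpha_n$ with the usual edges) by adding a new node $\{-\lambda\}$ and drawing a single edge between $\{-\lambda\}$ and $\alpha_i$ if and only if $(\lambda,\alpha_i)>0$. A subdiagram means the induced subdiagram on a subset of the vertices. *)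

(* Defs.v *)
From HB Require Import structures.
From mathcomp Require Import all_boot all_order all_algebra.
From mathcomp Require Import reals.
Set Implicit Arguments. Unset Strict Implicit. Unset Printing Implicit Defensive.
Import Order.TTheory GRing.Theory Num.Theory.
Local Open Scope ring_scope.

Section RootSystems.
Variables (R : realType) (n : nat).
Notation vec := 'rV[R]_n.

Definition dot (u v : vec) : R := (u *m v^T) 0 0.

Definition refl (a v : vec) : vec := v - ((2 * dot v a) / dot a a) *: a.

(* Phi is a reduced, irreducible (crystallographic) root system in E
   (spanning of E is guaranteed by the base hypothesis below). *)
Definition is_irred_reduced_root_system (Phi : seq vec) : Prop :=
  [/\ 0 \notin Phi,
      (forall a b, a \in Phi -> b \in Phi -> refl a b \in Phi),
      (forall a b, a \in Phi -> b \in Phi ->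
         exists z : int, (2 * dot b a) / dot a a = z%:~R),
      (forall a (c : R), a \in Phi -> c *: a \in Phi -> c = 1 \/ c = -1) &
      (forall P : pred vec,
         (forall a b, a \in Phi -> b \in Phi -> P a -> ~~ P b -> dot a b = 0) ->
         all P Phi \/ all (predC P) Phi)].

Definition is_base (Phi : seq vec) (alpha : 'I_n -> vec) : Prop :=
  [/\ (forall i, alpha i \in Phi),
      row_free (\matrix_(i < n) alpha i) &
      (forall b, b \in Phi -> exists c : 'I_n -> int,
          b = \sum_(i < n) (c i)%:~R *: alpha i /\
          ((forall i, (0 <= c i)%R) \/ (forall i, (c i <= 0)%R)))].

Inductive weyl (Phi : seq vec) : (vec -> vec) -> Prop :=
  | weyl_id : weyl Phi id
  | weyl_step a w : a \in Phi -> weyl Phi w -> weyl Phi (refl a \o w).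

Definition dominant_integral (alpha : 'I_n -> vec) (lam : vec) : Prop :=
  forall i, exists m : nat, (2 * dot lam (alpha i)) / dot (alpha i) (alpha i) = m%:R.

Definition conv (S : vec -> Prop) (x : vec) : Prop :=
  exists (k : nat) (p : 'I_k -> vec) (t : 'I_k -> R),
    [/\ (forall i, S (p i)), (forall i, 0 <= t i), \sum_(i < k) t i = 1 &
        x = \sum_(i < k) t i *: p i].

Definition weight_polytope (Phi : seq vec) (lam : vec) : vec -> Prop :=
  conv (fun x => exists w, weyl Phi w /\ x = w lam).

(* F is a nonempty face of P: F = P cut out by a supporting hyperplane
   (c = 0 gives P itself). *)
Definition nonempty_face (P F : vec -> Prop) : Prop :=
  (exists x, F x) /\
  exists c : vec, forall x, F x <-> (P x /\ forall y, P y -> dot c y <= dot c x).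

Definition same_W_orbit (Phi : seq vec) (F G : vec -> Prop) : Prop :=
  exists w, weyl Phi w /\ forall x, G x <-> exists y, F y /\ x = w y.

(* Extended Dynkin diagram on vertices option 'I_n (None = {-lambda}). *)
Definition ext_adj (alpha : 'I_n -> vec) (lam : vec) (x y : option 'I_n) : bool :=
  match x, y with
  | Some i, Some j => (i != j) && (dot (alpha i) (alpha j) != 0)
  | None, Some i | Some i, None => 0 < dot lam (alpha i)
  | None, None => false
  end.

Definition connected_sub (adj : rel (option 'I_n)) (S : {set option 'I_n}) : Prop :=
  forall x y, x \in S -> y \in S ->
    connect (fun u v => [&& u \in S, v \in S & adj u v]) x y.

End RootSystems.

(* Main.v *)
Require Import Defs.
From HB Require Import structures.
From mathcomp Require Import all_boot all_order all_algebra.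
From mathcomp Require Import reals.
From mathcomp Require Import ring lra zify.
From Stdlib Require Import Classical.
From mathcomp Require Import boolp.
From Stdlib Require ClassicalEpsilon.
Set Implicit Arguments. Unset Strict Implicit. Unset Printing Implicit Defensive.
Import Order.TTheory GRing.Theory Num.Theory.
Local Open Scope ring_scope.

Section Basics.
Variables (R : realType) (n : nat).
Notation vec := 'rV[R]_n.
Implicit Types u v w a : vec.

Lemma dotDl u v w : dot (u + v) w = dot u w + dot v w.
Proof. by rewrite /dot mulmxDl mxE. Qed.
Lemma dotZl k u v : dot (k *: u) v = k * dot u v.
Proof. by rewrite /dot -scalemxAl mxE. Qed.
Lemma dotC u v : dot u v = dot v u.
Proof.
rewrite /dot; have -> : v *m u^T = (u *m v^T)^T by rewrite trmx_mul trmxK.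
by rewrite [in RHS]mxE.
Qed.
Lemma dotDr u v w : dot u (v + w) = dot u v + dot u w.
Proof. by rewrite dotC dotDl !(dotC u). Qed.
Lemma dotZr k u v : dot u (k *: v) = k * dot u v.
Proof. by rewrite dotC dotZl dotC. Qed.
Lemma dot0l u : dot 0 u = 0.
Proof. by rewrite -(scale0r (0:vec)) dotZl mul0r. Qed.
Lemma dot0r u : dot u 0 = 0.
Proof. by rewrite dotC dot0l. Qed.
Lemma dotNl u v : dot (- u) v = - dot u v.
Proof. by rewrite -scaleN1r dotZl mulN1r. Qed.
Lemma dotNr u v : dot u (- v) = - dot u v.
Proof. by rewrite dotC dotNl dotC. Qed.
Lemma dotBl u v w : dot (u - v) w = dot u w - dot v w.
Proof. by rewrite dotDl dotNl. Qed.
Lemma dotBr u v w : dot u (v - w) = dot u v - dot u w.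
Proof. by rewrite dotDr dotNr. Qed.
Lemma dot_suml (I : Type) (r : seq I) (P : pred I) (F : I -> vec) v :
  dot (\sum_(i <- r | P i) F i) v = \sum_(i <- r | P i) dot (F i) v.
Proof.
elim/big_rec2: _ => [|i x y _ <-]; first by rewrite dot0l.
by rewrite dotDl.
Qed.
Lemma dot_sumr (I : Type) (r : seq I) (P : pred I) (F : I -> vec) v :
  dot v (\sum_(i <- r | P i) F i) = \sum_(i <- r | P i) dot v (F i).
Proof. by rewrite dotC dot_suml; apply: eq_bigr => i _; rewrite dotC. Qed.
Lemma dotE u v : dot u v = \sum_j u 0 j * v 0 j.
Proof. by rewrite /dot mxE; apply: eq_bigr => j _; rewrite mxE. Qed.
Lemma dot_ge0 u : 0 <= dot u u.
Proof. by rewrite dotE sumr_ge0 // => j _; rewrite -expr2 sqr_ge0. Qed.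
Lemma dot_eq0 u : (dot u u == 0) = (u == 0).
Proof.
apply/idP/idP => [|/eqP->]; last by rewrite dot0l.
rewrite dotE psumr_eq0 => [/allP H|j _]; last by rewrite -expr2 sqr_ge0.
apply/eqP/rowP => j; rewrite mxE.
have := H j (mem_index_enum j); rewrite implyTb mulf_eq0 orbb.
by move/eqP.
Qed.
Lemma dot_gt0 u : u != 0 -> 0 < dot u u.
Proof. by move=> nz; rewrite lt_def dot_eq0 nz dot_ge0. Qed.

Lemma mxeD u v (j : 'I_n) : (u + v) 0 j = u 0 j + v 0 j.
Proof. by rewrite mxE. Qed.
Lemma mxeN u (j : 'I_n) : (- u) 0 j = - u 0 j.
Proof. by rewrite mxE. Qed.
Lemma mxeB u v (j : 'I_n) : (u - v) 0 j = u 0 j - v 0 j.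
Proof. by rewrite mxeD mxeN. Qed.
Lemma mxeZ k u (j : 'I_n) : (k *: u) 0 j = k * u 0 j.
Proof. by rewrite mxE. Qed.
Lemma mxe0 (j : 'I_n) : (0 : vec) 0 j = 0.
Proof. by rewrite mxE. Qed.

Definition rmat a : 'M[R]_n := 1%:M - (2 / dot a a) *: (a^T *m a).
Lemma reflE a v : refl a v = v *m rmat a.
Proof.
rewrite /refl /rmat mulmxBr mulmx1 -scalemxAr mulmxA.
rewrite [v *m a^T]mx11_scalar mul_scalar_mx scalerA.
by congr (_ - _ *: _); rewrite /dot mulrAC.
Qed.
Lemma reflD a u v : refl a (u + v) = refl a u + refl a v.
Proof. by rewrite !reflE mulmxDl. Qed.
Lemma reflZ a k u : refl a (k *: u) = k *: refl a u.
Proof. by rewrite !reflE scalemxAl. Qed.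
Lemma refl_aa a : dot a a != 0 -> refl a a = - a.
Proof.
move=> nz; rewrite /refl mulfK //.
by rewrite scaler_nat mulr2n opprD addrA subrr add0r.
Qed.
Lemma reflK a : dot a a != 0 -> forall v, refl a (refl a v) = v.
Proof.
move=> nz v; rewrite {2}/refl -scaleNr reflD reflZ refl_aa //.
by rewrite scaleNr scalerN opprK /refl subrK.
Qed.
Lemma refl_dot a u v : dot a a != 0 -> dot (refl a u) (refl a v) = dot u v.
Proof.
move=> nz; rewrite /refl !(dotBl, dotBr, dotZl, dotZr) ?(dotC a u) ?(dotC a v).
by field.
Qed.
Lemma refl_adj a u v : dot a a != 0 -> dot (refl a u) v = dot u (refl a v).
Proof. by move=> nz; rewrite -{1}(reflK nz v) refl_dot. Qed.
End Basics.

Section Roots.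
Variables (R : realType) (n : nat) (Phi : seq 'rV[R]_n)
  (alpha : 'I_n -> 'rV[R]_n) (lam : 'rV[R]_n).
Hypothesis HR : is_irred_reduced_root_system Phi.
Hypothesis HB : is_base Phi alpha.
Notation vec := 'rV[R]_n.
Implicit Types u v w a b x y : vec.

Definition Amx : 'M[R]_n := \matrix_(i < n) alpha i.
Lemma Amx_unit : Amx \in unitmx.
Proof. by case: HB => _ rf _; rewrite -row_free_unit. Qed.
Definition coord x : 'rV[R]_n := x *m invmx Amx.
Lemma coordK x : x = \sum_i coord x 0 i *: alpha i.
Proof.
have -> : \sum_i coord x 0 i *: alpha i = coord x *m Amx.
  by rewrite mulmx_sum_row; apply: eq_bigr => i _; rewrite rowK.
by rewrite /coord (mulmxKV Amx_unit).
Qed.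
Lemma sum_coord (c : 'I_n -> R) : coord (\sum_i c i *: alpha i) = \row_i c i.
Proof.
have -> : \sum_i c i *: alpha i = (\row_i c i) *m Amx.
  by rewrite mulmx_sum_row; apply: eq_bigr => i _; rewrite mxE rowK.
by rewrite /coord (mulmxK Amx_unit).
Qed.
Lemma coordD x y : coord (x + y) = coord x + coord y.
Proof. by rewrite /coord mulmxDl. Qed.
Lemma coordZ k x : coord (k *: x) = k *: coord x.
Proof. by rewrite /coord scalemxAl. Qed.
Lemma coordN x : coord (- x) = - coord x.
Proof. by rewrite /coord mulNmx. Qed.
Lemma coordB x y : coord (x - y) = coord x - coord y.
Proof. by rewrite coordD coordN. Qed.
Lemma coord0 : coord 0 = 0.
Proof. by rewrite /coord mul0mx. Qed.
Lemma coord_alpha i j : coord (alpha i) 0 j = (i == j)%:R.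
Proof.
have -> : alpha i = \sum_k (i == k)%:R *: alpha k.
  rewrite (bigD1 i) //= eqxx scale1r big1 ?addr0 // => k; rewrite eq_sym => /negbTE ->.
  by rewrite scale0r.
by rewrite sum_coord mxE.
Qed.
Lemma coord_eq0 x : (forall i, coord x 0 i = 0) -> x = 0.
Proof.
move=> H; rewrite (coordK x) big1 // => i _; by rewrite H scale0r.
Qed.

Definition posb x := [forall i, 0 <= coord x 0 i].
Lemma posbP x : reflect (forall i, 0 <= coord x 0 i) (posb x).
Proof. exact: forallP. Qed.
Lemma posbD x y : posb x -> posb y -> posb (x + y).
Proof.
move=> /posbP hx /posbP hy; apply/posbP => i; rewrite coordD mxeD.
exact: addr_ge0.
Qed.
Lemma posbZ k x : 0 <= k -> posb x -> posb (k *: x).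
Proof.
move=> hk /posbP hx; apply/posbP => i; rewrite coordZ mxeZ.
exact: mulr_ge0.
Qed.
Lemma posb_alpha i : posb (alpha i).
Proof. by apply/posbP => j; rewrite coord_alpha ler0n. Qed.
Lemma posb0 : posb 0.
Proof. by apply/posbP => j; rewrite coord0 mxe0. Qed.
Lemma posb_antisym x : posb x -> posb (- x) -> x = 0.
Proof.
move=> /posbP h1 /posbP h2; apply: coord_eq0 => i.
have := h2 i; rewrite coordN mxeN oppr_ge0 => h3.
by apply/eqP; rewrite eq_le h3 h1.
Qed.

Lemma root_nz b : b \in Phi -> b != 0.
Proof. by case: HR => h0 _ _ _ _ hb; apply: contraNneq h0 => <-. Qed.
Lemma root_dot_gt0 b : b \in Phi -> 0 < dot b b.
Proof. by move=> hb; apply: dot_gt0; apply: root_nz. Qed.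
Lemma root_dot_nz b : b \in Phi -> dot b b != 0.
Proof. by move=> hb; rewrite gt_eqF // root_dot_gt0. Qed.
Lemma refl_Phi a b : a \in Phi -> b \in Phi -> refl a b \in Phi.
Proof. by case: HR => _ h _ _ _; apply: h. Qed.
Lemma cartan_int a b : a \in Phi -> b \in Phi ->
  exists z : int, 2 * dot b a / dot a a = z%:~R.
Proof. by case: HR => _ _ h _ _; apply: h. Qed.
Lemma root_reduced a (c : R) : a \in Phi -> c *: a \in Phi -> c = 1 \/ c = -1.
Proof. by case: HR => _ _ _ h _; apply: h. Qed.
Lemma alpha_Phi i : alpha i \in Phi.
Proof. by case: HB => h _ _. Qed.
Lemma alpha_nz i : dot (alpha i) (alpha i) != 0.
Proof. exact: root_dot_nz (alpha_Phi i). Qed.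
Lemma alpha_gt0 i : 0 < dot (alpha i) (alpha i).
Proof. exact: root_dot_gt0 (alpha_Phi i). Qed.
Lemma oppr_Phi b : b \in Phi -> - b \in Phi.
Proof. by move=> hb; rewrite -refl_aa ?root_dot_nz // refl_Phi. Qed.
Lemma root_sign b : b \in Phi -> posb b \/ posb (- b).
Proof.
case: HB => _ _ h hb; have [c [eb hc]] := h b hb.
have ec : forall i, coord b 0 i = (c i)%:~R.
  by move=> i; rewrite eb sum_coord mxE.
case: hc => hc; [left|right]; apply/posbP => i.
  by rewrite ec ler0z.
by rewrite coordN mxeN ec oppr_ge0 lerz0.
Qed.
Lemma root_not_both b : b \in Phi -> posb b -> posb (- b) -> False.
Proof. by move=> hb h1 h2; move: (root_nz hb); rewrite (posb_antisym h1 h2) eqxx. Qed.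
Lemma coord_refl i x :
  coord (refl (alpha i) x) = coord x - (2 * dot x (alpha i) / dot (alpha i) (alpha i)) *: coord (alpha i).
Proof. by rewrite /refl coordB coordZ. Qed.
Lemma coord_refl_ne i j x : i != j -> coord (refl (alpha i) x) 0 j = coord x 0 j.
Proof.
move=> ij; rewrite coord_refl mxeB mxeZ coord_alpha (negbTE ij) mulr0 subr0 //.
Qed.

Lemma alpha_dot_le0 i j : i != j -> dot (alpha i) (alpha j) <= 0.
Proof.
move=> ij; rewrite leNgt; apply/negP => hpos.
set b := refl (alpha i) (alpha j).
have hb : b \in Phi by rewrite refl_Phi ?alpha_Phi.
have ci : coord b 0 i < 0.
  rewrite /b coord_refl mxeB mxeZ !coord_alpha eqxx eq_sym (negbTE ij) sub0r oppr_lt0 mulr1.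
  by rewrite divr_gt0 ?alpha_gt0 // mulr_gt0 // dotC.
have cj : coord b 0 j = 1 by rewrite /b coord_refl_ne // coord_alpha eqxx.
case: (root_sign hb) => /posbP h.
  by have := h i; rewrite leNgt ci.
by have := h j; rewrite coordN mxeN cj oppr_ge0 ler10.
Qed.

Lemma simple_pos i b : b \in Phi -> posb b -> b != alpha i ->
  posb (refl (alpha i) b).
Proof.
move=> hb pb nb.
case: (boolP [exists j, (j != i) && (0 < coord b 0 j)]) => [/existsP [j /andP [ji cj]]|].
  case: (root_sign (refl_Phi (alpha_Phi i) hb)) => // /posbP h.
  by have := h j; rewrite coordN mxeN coord_refl_ne 1?eq_sym // oppr_ge0 leNgt cj.
rewrite negb_exists => /forallP hj.
have eb : b = coord b 0 i *: alpha i.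
  rewrite {1}(coordK b) (bigD1 i) //= big1 ?addr0 // => j ji.
  have := hj j; rewrite ji /= -leNgt => hle.
  have /posbP := pb => /(_ j) hge.
  have -> : coord b 0 j = 0 by apply/eqP; rewrite eq_le hle hge.
  by rewrite scale0r.
have hb' : coord b 0 i *: alpha i \in Phi by rewrite -eb.
case: (root_reduced (alpha_Phi i) hb') => hc.
  by move: nb; rewrite eb hc scale1r eqxx.
by have /posbP := pb => /(_ i); rewrite hc ler0N1.
Qed.

Definition sw (s : seq 'I_n) : vec -> vec := foldr (fun i f => refl (alpha i) \o f) id s.
Definition swM (s : seq 'I_n) : 'M[R]_n := foldr (fun i M => M *m rmat (alpha i)) 1%:M s.
Lemma swE s v : sw s v = v *m swM s.
Proof.
elim: s v => [|i s IH] v /=; first by rewrite mulmx1.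
by rewrite IH reflE mulmxA.
Qed.
Lemma swD s u v : sw s (u + v) = sw s u + sw s v.
Proof. by rewrite !swE mulmxDl. Qed.
Lemma swZ s k v : sw s (k *: v) = k *: sw s v.
Proof. by rewrite !swE scalemxAl. Qed.
Lemma swN s v : sw s (- v) = - sw s v.
Proof. by rewrite !swE mulNmx. Qed.
Lemma swB s u v : sw s (u - v) = sw s u - sw s v.
Proof. by rewrite swD swN. Qed.
Lemma sw0 s : sw s 0 = 0.
Proof. by rewrite swE mul0mx. Qed.
Lemma sw_sum s (I : Type) (r : seq I) (P : pred I) (F : I -> vec) :
  sw s (\sum_(i <- r | P i) F i) = \sum_(i <- r | P i) sw s (F i).
Proof. by rewrite swE mulmx_suml; apply: eq_bigr => i _; rewrite swE. Qed.
Lemma sw_cat s t v : sw (s ++ t) v = sw s (sw t v).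
Proof. by elim: s => [|i s IH] //=; rewrite IH. Qed.
Lemma sw_rcons s i v : sw (rcons s i) v = sw s (refl (alpha i) v).
Proof. by rewrite -cats1 sw_cat. Qed.
Lemma sw_cons i s v : sw (i :: s) v = refl (alpha i) (sw s v).
Proof. by []. Qed.
Lemma sw_revK s v : sw (rev s) (sw s v) = v.
Proof.
elim: s v => [|i s IH] v //=.
by rewrite rev_cons sw_rcons reflK ?alpha_nz // IH.
Qed.
Lemma sw_Krev s v : sw s (sw (rev s) v) = v.
Proof. by have := sw_revK (rev s) v; rewrite revK. Qed.
Lemma sw_inj s : injective (sw s).
Proof. exact: can_inj (sw_revK s). Qed.
Lemma sw_dot s u v : dot (sw s u) (sw s v) = dot u v.
Proof.
elim: s => [|i s IH] //=.
by rewrite refl_dot ?alpha_nz.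
Qed.
Lemma sw_Phi s b : b \in Phi -> sw s b \in Phi.
Proof.
elim: s => [|i s IH] //= hb.
by rewrite refl_Phi ?alpha_Phi ?IH.
Qed.
Lemma sw_weyl s : weyl Phi (sw s).
Proof.
elim: s => [|i s IH]; first exact: weyl_id.
exact: (weyl_step (alpha_Phi i) IH).
Qed.
Lemma sw_conj s a v : dot a a != 0 ->
  sw s (refl a v) = refl (sw s a) (sw s v).
Proof.
move=> nz; rewrite {2}/refl !sw_dot /refl swB swZ //.
Qed.

Definition height x := \sum_i coord x 0 i.
Lemma height_refl j x :
  height (refl (alpha j) x) = height x - 2 * dot x (alpha j) / dot (alpha j) (alpha j).
Proof.
rewrite /height coord_refl.
under eq_bigr => i _ do rewrite mxeB mxeZ coord_alpha.
rewrite sumrB -mulr_sumr.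
have -> : \sum_i (j == i)%:R = 1 :> R.
  rewrite (bigD1 j) //= eqxx big1 ?addr0 // => i.
  by rewrite eq_sym => /negbTE ->.
by rewrite mulr1.
Qed.
Lemma height_ge0 x : posb x -> 0 <= height x.
Proof. by move=> /posbP h; rewrite /height sumr_ge0. Qed.

Lemma pos_root_word (N : nat) b : b \in Phi -> posb b -> height b < N%:R ->
  exists t i, b = sw t (alpha i).
Proof.
elim: N b => [|N IH] b hb pb hN.
  by move: hN; rewrite ltNge height_ge0.
case: (boolP [exists i, b == alpha i]) => [/existsP [i /eqP ->]|].
  by exists [::], i.
rewrite negb_exists => /forallP nb.
have [j hj] : exists j, 0 < dot b (alpha j).
  case: (boolP [exists j, 0 < dot b (alpha j)]) => [/existsP [j hj]|]; first by exists j.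
  rewrite negb_exists => /forallP hj.
  have := root_dot_gt0 hb; rewrite {1}(coordK b) dot_suml.
  rewrite ltNge => /negP []; apply: sumr_le0 => i _.
  rewrite dotZl dotC; apply: mulr_ge0_le0.
    by have /posbP := pb; apply.
  by have := hj i; rewrite -leNgt.
have nbj := nb j.
set b' := refl (alpha j) b.
have hb' : b' \in Phi by rewrite refl_Phi ?alpha_Phi.
have pb' : posb b' by apply: simple_pos.
have [z hz] := cartan_int (alpha_Phi j) hb.
have kpos : 0 < 2 * dot b (alpha j) / dot (alpha j) (alpha j).
  by rewrite divr_gt0 ?alpha_gt0 // mulr_gt0.
have k1 : 1 <= 2 * dot b (alpha j) / dot (alpha j) (alpha j).
  by move: kpos; rewrite hz ltr0z => zp; rewrite ler1z.
have [t [i ht]] : exists t i, b' = sw t (alpha i).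
  apply: IH => //; rewrite /b' height_refl.
  by move: hN; rewrite -natr1; lra.
exists (j :: t), i; rewrite sw_cons -ht /b' reflK ?alpha_nz //.
Qed.

Lemma root_word b : b \in Phi -> exists t i, b = sw t (alpha i).
Proof.
move=> hb.
have hpos : forall c, c \in Phi -> posb c -> exists t i, c = sw t (alpha i).
  move=> c hc pc; apply: (@pos_root_word (Num.bound (height c))) => //.
  by apply: archi_boundP; apply: height_ge0.
case: (root_sign hb) => pb; first exact: hpos.
have [t [i ht]] := hpos _ (oppr_Phi hb) pb.
exists (rcons t i), i; rewrite sw_rcons refl_aa ?alpha_nz // swN -ht opprK //.
Qed.

Lemma weyl_sw (w : vec -> vec) : weyl Phi w -> exists s, forall v, w v = sw s v.
Proof.
elim => [|a w' ha hw [s hs]]; first by exists [::].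
have [t [i ht]] := root_word ha.
exists (t ++ i :: (rev t ++ s)) => v /=.
rewrite sw_cat sw_cons sw_cat -hs.
by rewrite sw_conj ?alpha_nz // -ht sw_Krev.
Qed.

Definition del (k : nat) (s : seq 'I_n) := take k s ++ drop k.+1 s.
Lemma size_del k s : (k < size s)%N -> size (del k s) = (size s).-1.
Proof. move=> hk; rewrite /del size_cat size_take size_drop hk; lia. Qed.

Lemma deletion s i : ~~ posb (sw s (alpha i)) ->
  exists k, (k < size s)%N /\ forall v, sw s (refl (alpha i) v) = sw (del k s) v.
Proof.
elim: s => [|j s IH] h; first by move: h; rewrite /= posb_alpha.
case: (boolP (posb (sw s (alpha i)))) => hp.
  have e : sw s (alpha i) = alpha j.
    apply/eqP; apply: contraNT h => ne.
    exact: simple_pos (sw_Phi _ (alpha_Phi i)) hp ne.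
  exists 0%N; split => // v.
  by rewrite /del /= drop0 sw_conj ?alpha_nz // e reflK ?alpha_nz.
have [k [hk hv]] := IH hp.
by exists k.+1; split => // v; rewrite sw_cons hv.
Qed.

Definition minimal s := forall t, (forall v, sw t v = sw s v) -> (size s <= size t)%N.

Lemma exists_minimal s : exists t, (forall v, sw t v = sw s v) /\ minimal t.
Proof.
move: {2}(size s) (leqnn (size s)) => m.
elim: m s => [|m IH] s hs.
  exists s; split => // t _; move: hs; rewrite leqn0 => /eqP ->; exact: leq0n.
case: (Classical_Prop.classic (minimal s)) => hmin; first by exists s.
have [t [ht hlt]] : exists t, (forall v, sw t v = sw s v) /\ (size t < size s)%N.
  apply: NNPP => H; apply: hmin => t ht; rewrite leqNgt; apply/negP => lt.
  by apply: H; exists t.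
have ht' : (size t <= m)%N by rewrite -ltnS (leq_trans hlt hs).
have [u [hu hmu]] := IH t ht'.
by exists u; split => // v; rewrite hu ht.
Qed.

Lemma minimal_rcons s i : minimal (rcons s i) -> minimal s /\ posb (sw s (alpha i)).
Proof.
move=> hmin; split.
  move=> t ht; have := hmin (rcons t i) (fun v => ltac:(by rewrite !sw_rcons ht)).
  by rewrite !size_rcons ltnS.
apply: contraT => np; have [k [hk hv]] := deletion np.
have := hmin (del k s) (fun v => ltac:(by rewrite sw_rcons hv)).
rewrite size_rcons size_del //; lia.
Qed.

Definition domi x := forall i, 0 <= dot x (alpha i).

Lemma dom_le x s : domi x -> posb (x - sw s x).
Proof.
move=> hx; have [t [ht hmin]] := exists_minimal s.
rewrite -ht; elim/last_ind: t hmin {ht} => [|t i IH] hmin.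
  by rewrite /= subrr posb0.
have [hm hp] := minimal_rcons hmin.
rewrite sw_rcons.
have -> : x - sw t (refl (alpha i) x) = (x - sw t x) + sw t (x - refl (alpha i) x).
  by rewrite swB addrA subrK.
apply: posbD; first exact: IH.
have -> : x - refl (alpha i) x = (2 * dot x (alpha i) / dot (alpha i) (alpha i)) *: alpha i.
  by rewrite /refl opprB addrC subrK.
rewrite swZ; apply: posbZ => //.
by rewrite divr_ge0 ?mulr_ge0 ?hx // ltW ?alpha_gt0.
Qed.

Lemma dom_unique x s : domi x -> domi (sw s x) -> sw s x = x.
Proof.
move=> hx hy; have h1 := dom_le s hx; have h2 := dom_le (rev s) hy.
rewrite sw_revK in h2.
apply/eqP; rewrite -subr_eq0; apply/eqP; apply: posb_antisym => //.
by rewrite opprB.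
Qed.

Lemma count_le_in (T : eqType) (P Q : pred T) (r : seq T) :
  (forall z : T, z \in r -> P z -> Q z) -> (count P r <= count Q r)%N.
Proof.
elim: r => //= y r IH H; apply: leq_add.
  by have := H y (mem_head _ _); case: (P y); case: (Q y) => // /(_ isT).
by apply: IH => x hx; apply: H; rewrite in_cons hx orbT.
Qed.
Lemma count_lt_in (T : eqType) (P Q : pred T) (r : seq T) :
  (forall z : T, z \in r -> P z -> Q z) -> (exists2 z : T, z \in r & Q z && ~~ P z) ->
  (count P r < count Q r)%N.
Proof.
elim: r => [|y r IH] H [x hx hqp] //.
move: hx; rewrite in_cons => /orP [/eqP exy|hx] /=.
  subst x; move/andP: hqp => [-> /negbTE ->]; rewrite add0n add1n ltnS.
  by apply: count_le_in => z hz; apply: H; rewrite in_cons hz orbT.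
rewrite -addnS; apply: leq_add.
  by have := H y (mem_head _ _); case: (P y); case: (Q y) => // /(_ isT).
apply: IH; last by exists x.
by move=> z hz; apply: H; rewrite in_cons hz orbT.
Qed.

Definition negcnt c := count (fun b => posb b && (dot c b < 0)) (undup Phi).

Lemma negcnt_dec c i : dot c (alpha i) < 0 -> (negcnt (refl (alpha i) c) < negcnt c)%N.
Proof.
move=> hc; set U := undup Phi.
have eU : perm_eq [seq refl (alpha i) b | b <- U] U.
  apply: uniq_perm; last 1 first.
  - move=> x; rewrite mem_undup; apply/mapP/idP => [[y]|hx].
      by rewrite mem_undup => hy ->; apply: refl_Phi (alpha_Phi i) hy.
    exists (refl (alpha i) x); last by rewrite reflK ?alpha_nz.
    by rewrite mem_undup refl_Phi ?alpha_Phi.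
  - by rewrite map_inj_uniq ?undup_uniq //; apply: can_inj (reflK (alpha_nz i)).
  - exact: undup_uniq.
rewrite [X in (_ < X)%N]/negcnt -(permP eU) count_map.
apply: count_lt_in.
  move=> x; rewrite mem_undup => hx /andP [px].
  rewrite refl_adj ?alpha_nz // => hlt; apply/andP; split => //.
  apply: simple_pos => //; apply/eqP => ex; move: hlt.
  by rewrite ex refl_aa ?alpha_nz // dotNr oppr_lt0 ltNge ltW.
exists (- alpha i); first by rewrite mem_undup oppr_Phi ?alpha_Phi.
have e : refl (alpha i) (- alpha i) = alpha i.
  by rewrite reflE mulNmx -reflE refl_aa ?alpha_nz // opprK.
rewrite /= e posb_alpha hc /=.
apply/negP => /andP [hn _]; apply: (root_not_both (oppr_Phi (alpha_Phi i)) hn).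
by rewrite opprK posb_alpha.
Qed.

Lemma exists_dom c : exists s, domi (sw s c).
Proof.
move: {2}(negcnt c) (leqnn (negcnt c)) => m.
elim: m c => [|m IH] c hc.
  case: (boolP [forall i, 0 <= dot c (alpha i)]) => [/forallP h|]; first by exists [::].
  rewrite negb_forall => /existsP [i]; rewrite -ltNge => hi.
  by have := negcnt_dec hi; rewrite ltnNge (leq_trans hc (leq0n _)).
case: (boolP [forall i, 0 <= dot c (alpha i)]) => [/forallP h|]; first by exists [::].
rewrite negb_forall => /existsP [i]; rewrite -ltNge => hi.
have [s hs] := IH (refl (alpha i) c) (leq_trans (negcnt_dec hi) hc).
by exists (rcons s i); rewrite sw_rcons.
Qed.

Hypothesis HD : dominant_integral alpha lam.

Lemma lam_dom : domi lam.
Proof.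
move=> i; have [m hm] := HD i.
have h : 0 <= 2 * dot lam (alpha i) / dot (alpha i) (alpha i) by rewrite hm ler0n.
by move: h; rewrite -mulrA pmulr_rge0 // pmulr_lge0 // invr_gt0 alpha_gt0.
Qed.

Definition O v := exists s, v = sw s lam.
Lemma O_lam : O lam.
Proof. by exists [::]. Qed.
Lemma O_W s v : O v -> O (sw s v).
Proof. by case=> t ->; exists (s ++ t); rewrite sw_cat. Qed.
Lemma O_Wr s v : O (sw s v) -> O v.
Proof. by move=> /(O_W (rev s)); rewrite sw_revK. Qed.
Lemma orbit_iff x : (exists w : vec -> vec, weyl Phi w /\ x = w lam) <-> O x.
Proof.
split=> [[w [hw ->]]|[s ->]]; last by exists (sw s); split => //; apply: sw_weyl.
by have [s hs] := weyl_sw hw; exists s; rewrite hs.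
Qed.

Lemma conv_mono (S S' : vec -> Prop) x : (forall y, S y -> S' y) -> conv S x -> conv S' x.
Proof.
move=> h [k [p [t [hp ht hs ->]]]]; exists k, p, t; split => // i; exact: h.
Qed.
Definition Pol x := conv O x.
Lemma Pol_iff x : weight_polytope Phi lam x <-> Pol x.
Proof.
split; apply: conv_mono => y; first by move/orbit_iff.
by move/orbit_iff.
Qed.
Lemma conv_pt (S : vec -> Prop) x : S x -> conv S x.
Proof.
move=> hx; exists 1%N, (fun _ => x), (fun _ => 1); split => //.
- by rewrite big_ord1.
- by rewrite big_ord1 scale1r.
Qed.
Lemma Pol_lam : Pol lam.
Proof. exact: conv_pt O_lam. Qed.
Lemma Pol_W s x : Pol x -> Pol (sw s x).
Proof.
move=> [k [p [t [hp ht hs ->]]]]; exists k, (fun i => sw s (p i)), t; split => //.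
- by move=> i; apply: O_W.
- by rewrite sw_sum; apply: eq_bigr => i _; rewrite swZ.
Qed.
Lemma Pol_Wr s x : Pol (sw s x) -> Pol x.
Proof. by move=> /(Pol_W (rev s)); rewrite sw_revK. Qed.

Lemma conv_dot_le (S : vec -> Prop) c M y : conv S y ->
  (forall p, S p -> dot c p <= M) -> dot c y <= M.
Proof.
move=> [k [p [t [hp ht hs ->]]]] h.
rewrite dot_sumr (_ : M = \sum_(i < k) t i * M); last by rewrite -mulr_suml hs mul1r.
apply: ler_sum => i _; rewrite dotZr; apply: ler_wpM2l => //; exact: h.
Qed.
Lemma conv_dot_eq (S : vec -> Prop) c M y : conv S y ->
  (forall p, S p -> dot c p = M) -> dot c y = M.
Proof.
move=> [k [p [t [hp ht hs ->]]]] h.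
rewrite dot_sumr (_ : M = \sum_(i < k) t i * M); last by rewrite -mulr_suml hs mul1r.
by apply: eq_bigr => i _; rewrite dotZr h.
Qed.

Definition cand : seq vec :=
  map (fun t : {ffun 'I_n -> 'I_(size Phi).+1} => \sum_i coord lam 0 i *: nth 0 Phi (t i))
    (enum {ffun 'I_n -> 'I_(size Phi).+1}).
Lemma O_cand v : O v -> v \in cand.
Proof.
move=> [s ->]; apply/mapP.
exists [ffun i => inord (index (sw s (alpha i)) Phi)]; first by rewrite mem_enum.
rewrite {1}(coordK lam) sw_sum; apply: eq_bigr => i _; rewrite swZ ffunE.
have hi : sw s (alpha i) \in Phi by apply: sw_Phi; apply: alpha_Phi.
by rewrite inordK ?nth_index // ltnS ltnW // index_mem.
Qed.
Definition enumO : seq vec := undup [seq v <- cand | `[< O v >]].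
Lemma enumO_uniq : uniq enumO.
Proof. exact: undup_uniq. Qed.
Lemma enumOP v : (v \in enumO) <-> O v.
Proof.
rewrite mem_undup mem_filter; split => [/andP [/asboolP //]|hv].
by apply/andP; split; [apply/asboolP|apply: O_cand].
Qed.

Definition sigm (F : vec -> Prop) : vec := \sum_(v <- enumO | `[< F v >]) v.
Definition img s (F : vec -> Prop) : vec -> Prop := fun y => exists x, F x /\ y = sw s x.

Lemma sigm_ext F G : (forall v, F v <-> G v) -> sigm F = sigm G.
Proof.
move=> h; apply: eq_bigl => v; apply/asboolP/asboolP; by move/h.
Qed.
Lemma sigm_img s F : sigm (img s F) = sw s (sigm F).
Proof.
rewrite /sigm sw_sum -[LHS]big_filter -[RHS]big_filter.
rewrite (_ : \sum_(v <- [seq v <- enumO | `[< F v >]]) sw s v =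
   \sum_(v <- map (sw s) [seq v <- enumO | `[< F v >]]) v); last by rewrite big_map.
apply: perm_big; apply: uniq_perm.
- exact: filter_uniq enumO_uniq.
- by rewrite map_inj_uniq ?filter_uniq ?enumO_uniq //; apply: sw_inj.
move=> y; rewrite mem_filter; apply/andP/mapP => [[/asboolP [x [hx ->]] hy]|[x]].
  exists x => //; rewrite mem_filter; apply/andP; split; first by apply/asboolP.
  by apply/enumOP; apply: (@O_Wr s); apply/enumOP.
rewrite mem_filter => /andP [/asboolP hx hxO] ->; split.
  by apply/asboolP; exists x.
by apply/enumOP; apply: O_W; apply/enumOP.
Qed.

Definition Fc c x := Pol x /\ forall y, Pol y -> dot c y <= dot c x.
Lemma Fc_W s c x : Fc (sw s c) (sw s x) <-> Fc c x.
Proof.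
split => [[hx h]|[hx h]]; split.
- exact: Pol_Wr hx.
- by move=> y hy; have := h (sw s y) (Pol_W s hy); rewrite !sw_dot.
- exact: Pol_W.
- move=> y hy; rewrite -(sw_Krev s y) !sw_dot; apply: h.
  by apply: (@Pol_Wr s); rewrite sw_Krev.
Qed.
Lemma img_Fc s c x : Fc (sw s c) x <-> img s (Fc c) x.
Proof.
split => [h|[y [hy ->]]]; last by apply/Fc_W.
by exists (sw (rev s) x); rewrite sw_Krev; split => //; apply/(Fc_W s); rewrite sw_Krev.
Qed.

Lemma dot_coord x y : dot x y = \sum_i coord x 0 i * dot (alpha i) y.
Proof. by rewrite {1}(coordK x) dot_suml; apply: eq_bigr => i _; rewrite dotZl. Qed.

Lemma O_le c v : domi c -> O v -> dot c v <= dot c lam.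
Proof.
move=> hc [s ->]; rewrite -subr_ge0 -dotBr dotC dot_coord.
apply: sumr_ge0 => i _; apply: mulr_ge0; last by rewrite dotC.
by have /posbP := dom_le s lam_dom; apply.
Qed.
Lemma Fc_dom c x : domi c -> (Fc c x <-> Pol x /\ dot c x = dot c lam).
Proof.
move=> hc; split => [[hx h]|[hx e]].
  split => //; apply/eqP; rewrite eq_le (h lam Pol_lam) andbT.
  apply: conv_dot_le hx _ => p; exact: O_le.
split => // y hy; rewrite e; apply: conv_dot_le hy _ => p; exact: O_le.
Qed.

Definition Zc c : {set 'I_n} := [set i | dot c (alpha i) == 0].
Definition VZ (Z : {set 'I_n}) v := O v /\ forall i, i \notin Z -> coord (lam - v) 0 i = 0.

Lemma O_dot_eq c v : domi c -> O v -> (dot c v = dot c lam <-> VZ (Zc c) v).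
Proof.
move=> hc hv.
have e : dot c lam - dot c v = \sum_i coord (lam - v) 0 i * dot c (alpha i).
  by rewrite -dotBr dotC dot_coord; apply: eq_bigr => i _; rewrite dotC.
have hge : forall i, 0 <= coord (lam - v) 0 i * dot c (alpha i).
  move=> i; apply: mulr_ge0 => //; case: hv => s ->.
  by have /posbP := dom_le s lam_dom; apply.
split => [h|[_ h]].
  split => // i; rewrite inE => hi.
  have /eqP := e; rewrite h subrr eq_sym => /eqP /(psumr_eq0P (fun i _ => hge i)).
  by move=> /(_ i isT) /eqP; rewrite mulf_eq0 (negbTE hi) orbF => /eqP.
apply/eqP; rewrite eq_sym -subr_eq0 e; apply/eqP; apply: big1 => i _.
by case: (boolP (i \in Zc c)) => [|/h ->]; [rewrite inE => /eqP ->; rewrite mulr0|rewrite mul0r].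
Qed.

Lemma Fc_conv c x : domi c -> (Fc c x <-> conv (VZ (Zc c)) x).
Proof.
move=> hc; rewrite Fc_dom //; split => [[hx e]|hx].
  case: hx e => k [p [t [hp ht hs ->]]] e.
  have hle : forall i, 0 <= t i * (dot c lam - dot c (p i)).
    by move=> i; rewrite mulr_ge0 // subr_ge0 O_le.
  have h0 : \sum_i t i * (dot c lam - dot c (p i)) = 0.
    rewrite (eq_bigr (fun i => t i * dot c lam - dot c (t i *: p i))); last first.
      by move=> i _; rewrite dotZr mulrBr.
    by rewrite sumrB -mulr_suml hs mul1r -dot_sumr e subrr.
  have := psumr_eq0P (fun i _ => hle i) h0 => hz.
  exists k, (fun i => if t i == 0 then lam else p i), t; split => //.
    move=> i; case: eqP => [_|/eqP ti]; first by split; [exact: O_lam|move=> j _; rewrite subrr coord0 mxe0].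
    apply/O_dot_eq => //; apply/eqP; move: (hz i isT) => /eqP; rewrite mulf_eq0 (negbTE ti) /=.
    by rewrite subr_eq0 eq_sym.
  by apply: eq_bigr => i _; case: eqP => // ->; rewrite !scale0r.
split.
  by apply: conv_mono hx => y [].
apply: conv_dot_eq hx _ => p [hp hz]; apply/O_dot_eq => //.
Qed.

Lemma sigm_Fc c : domi c ->
  sigm (Fc c) = \sum_(v <- [seq v <- enumO | `[< VZ (Zc c) v >]]) v.
Proof.
move=> hc; rewrite big_filter /sigm [LHS]big_seq_cond [RHS]big_seq_cond.
apply: eq_bigl => v; case: (boolP (v \in enumO)) => //= /enumOP hv.
apply/asboolP/asboolP; rewrite Fc_dom //.
  by case=> _ /(O_dot_eq hc hv).
by move=> /(O_dot_eq hc hv) e; split => //; apply: conv_pt.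
Qed.

Implicit Types Z : {set 'I_n}.
Definition enumV (Z : {set 'I_n}) := [seq v <- enumO | `[< VZ Z v >]].
Definition sZ Z := \sum_(v <- enumV Z) v.
Definition S1 Z : {set 'I_n} :=
  [set k | `[< exists v, VZ Z v /\ coord (lam - v) 0 k != 0 >]].

Lemma enumVP Z v : (v \in enumV Z) <-> VZ Z v.
Proof.
rewrite mem_filter; split => [/andP [/asboolP //]|hv].
by apply/andP; split; [apply/asboolP|apply/enumOP; case: hv].
Qed.
Lemma VZ_lam Z : VZ Z lam.
Proof. by split; [exact: O_lam|move=> i _; rewrite subrr coord0 mxe0]. Qed.
Lemma VZ_pos Z v : VZ Z v -> posb (lam - v).
Proof. by case=> [[s ->]] _; apply: dom_le lam_dom. Qed.
Lemma VZ_coord_ge0 Z v k : VZ Z v -> 0 <= coord (lam - v) 0 k.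
Proof. by move/VZ_pos/posbP. Qed.

Lemma coord_sub_refl j x v i :
  coord (x - refl (alpha j) v) 0 i =
  coord (x - v) 0 i + 2 * dot v (alpha j) / dot (alpha j) (alpha j) * (j == i)%:R.
Proof.
have -> : x - refl (alpha j) v = (x - v) + (2 * dot v (alpha j) / dot (alpha j) (alpha j)) *: alpha j.
  by rewrite /refl opprB addrA addrAC.
by rewrite coordD coordZ mxeD mxeZ coord_alpha.
Qed.

Lemma VZ_refl Z j v : j \in Z -> VZ Z v -> VZ Z (refl (alpha j) v).
Proof.
move=> hj [hO h]; split; first exact: (O_W [:: j]).
move=> i hi; rewrite coord_sub_refl h //.
have -> : (j == i) = false by apply: contraNF hi => /eqP <-.
by rewrite mulr0 addr0.
Qed.

Lemma perm_VZ Z j : j \in Z ->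
  perm_eq [seq refl (alpha j) v | v <- enumV Z] (enumV Z).
Proof.
move=> hj; apply: uniq_perm.
- rewrite map_inj_uniq ?filter_uniq ?enumO_uniq //.
  exact: can_inj (reflK (alpha_nz j)).
- exact: filter_uniq enumO_uniq.
move=> y; apply/mapP/idP => [[x /enumVP hx ->]|/enumVP hy].
  by apply/enumVP; apply: VZ_refl.
exists (refl (alpha j) y); last by rewrite reflK ?alpha_nz.
by apply/enumVP; apply: VZ_refl.
Qed.

Lemma alpha_neq0 j : alpha j != 0.
Proof. exact: root_nz (alpha_Phi j). Qed.

Lemma sZ_fix Z j : j \in Z -> dot (sZ Z) (alpha j) = 0.
Proof.
move=> hj.
have e : refl (alpha j) (sZ Z) = sZ Z.
  rewrite /sZ reflE mulmx_suml.
  rewrite (eq_bigr (fun v => refl (alpha j) v)); last by move=> v _; rewrite reflE.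
  by rewrite -(big_map (refl (alpha j)) xpredT id) (perm_big _ (perm_VZ hj)).
have h0 : (2 * dot (sZ Z) (alpha j) / dot (alpha j) (alpha j)) *: alpha j = 0.
  have -> : (2 * dot (sZ Z) (alpha j) / dot (alpha j) (alpha j)) *: alpha j
       = sZ Z - refl (alpha j) (sZ Z) by rewrite /refl opprB addrC subrK.
  by rewrite e subrr.
move/eqP: h0; rewrite scaler_eq0 (negbTE (alpha_neq0 j)) orbF.
rewrite mulf_eq0 invr_eq0 (negbTE (alpha_nz j)) orbF mulf_eq0 pnatr_eq0 /=.
by move/eqP.
Qed.

Lemma VZ_dot Z v i : VZ Z v -> dot v (alpha i) =
  dot lam (alpha i) + \sum_k - (coord (lam - v) 0 k * dot (alpha k) (alpha i)).
Proof.
move=> _; rewrite sumrN -dot_coord dotBl opprB addrC subrK //.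
Qed.
Lemma VZ_term_ge0 Z v i k : VZ Z v -> coord (lam - v) 0 i = 0 ->
  0 <= - (coord (lam - v) 0 k * dot (alpha k) (alpha i)).
Proof.
move=> hv hi; case: (eqVneq k i) => [->|ki]; first by rewrite hi mul0r oppr0.
rewrite oppr_ge0; apply: mulr_ge0_le0; first exact: VZ_coord_ge0 hv.
exact: alpha_dot_le0.
Qed.
Lemma VZ_dot_ge Z v i : VZ Z v -> coord (lam - v) 0 i = 0 ->
  dot lam (alpha i) <= dot v (alpha i).
Proof.
move=> hv hi; rewrite (VZ_dot i hv) lerDl; apply: sumr_ge0 => k _.
exact: (VZ_term_ge0 k hv hi).
Qed.

Lemma sZ_dot Z i : dot (sZ Z) (alpha i) = \sum_(v <- enumV Z) dot v (alpha i).
Proof. exact: dot_suml. Qed.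

Lemma sZ_dom Z : domi (sZ Z).
Proof.
move=> i; case: (boolP (i \in Z)) => hi; first by rewrite sZ_fix.
rewrite sZ_dot big_seq; apply: sumr_ge0 => v /enumVP hv.
apply: le_trans (lam_dom i) (VZ_dot_ge hv _).
by case: hv => _ ->.
Qed.

Lemma sZ_zero Z i : dot (sZ Z) (alpha i) = 0 -> i \notin S1 Z ->
  dot lam (alpha i) = 0 /\ forall k, k \in S1 Z -> dot (alpha k) (alpha i) = 0.
Proof.
move=> h0 hi.
have hc0 : forall v, VZ Z v -> coord (lam - v) 0 i = 0.
  move=> v hv; apply/eqP; apply: contraNT hi => ne; rewrite inE; apply/asboolP.
  by exists v.
have hge : forall v, v \in enumV Z -> 0 <= dot v (alpha i).
  move=> v /enumVP hv; apply: le_trans (lam_dom i) (VZ_dot_ge hv (hc0 v hv)).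
have hz : forall v, VZ Z v -> dot v (alpha i) = 0.
  move: h0; rewrite sZ_dot big_seq_cond => /eqP; rewrite psumr_eq0.
    move=> /allP H v hv; have hv' : v \in enumV Z by apply/enumVP.
    by have := H v hv'; rewrite hv' /= => /eqP.
  by move=> v /andP [hv _]; apply: hge.
have hl : dot lam (alpha i) = 0 by apply: hz; apply: VZ_lam.
split => // k; rewrite inE => /asboolP [v [hv hk]].
have := hz v hv; rewrite (VZ_dot i hv) hl add0r => hs.
have := psumr_eq0P (fun k _ => VZ_term_ge0 k hv (hc0 v hv)) hs => H.
by move: (H k isT) => /eqP; rewrite oppr_eq0 mulf_eq0 (negbTE hk) /= => /eqP.
Qed.

Lemma S1_sub Z : S1 Z \subset Z.
Proof.
apply/subsetP => k; rewrite inE => /asboolP [v [[_ hv] hk]].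
by apply: contraNT hk => /hv ->.
Qed.
Lemma VZ_S1 Z v : VZ Z v -> VZ (S1 Z) v.
Proof.
move=> hv; split; first by case: hv.
move=> i hi; apply/eqP; apply: contraNT hi => ne; rewrite inE; apply/asboolP.
by exists v.
Qed.
Lemma VZ_mono Z Z' v : Z \subset Z' -> VZ Z v -> VZ Z' v.
Proof.
move=> hs [hO h]; split => // i hi; apply: h.
by apply: contraNN hi; apply: (subsetP hs).
Qed.

Definition adjI (i j : 'I_n) := (i != j) && (dot (alpha i) (alpha j) != 0).
Definition radj (X : {set 'I_n}) : rel 'I_n := fun i1 i2 => [&& i1 \in X, i2 \in X & adjI i1 i2].
Definition canon (X : {set 'I_n}) : {set 'I_n} :=
  [set i in X | [exists j, [&& j \in X, 0 < dot lam (alpha j) & connect (radj X) i j]]].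

Lemma adjI_sym : symmetric adjI.
Proof. by move=> i j; rewrite /adjI eq_sym dotC. Qed.
Lemma radj_sym X : symmetric (radj X).
Proof. by move=> u v; rewrite /radj adjI_sym; case: (u \in X); case: (v \in X). Qed.
Lemma radj_csym X : connect_sym (radj X).
Proof. exact: sym_connect_sym (radj_sym X). Qed.

Lemma connect_closed_in (T : finType) (e : rel T) (a : {set T}) (x y : T) :
  (forall u v : T, u \in a -> e u v -> v \in a) -> x \in a -> connect e x y -> y \in a.
Proof.
move=> h hx /connectP [p hp ->]; elim: p x hx hp => [|z p IH] x hx //= /andP [exz hp].
exact: IH (h _ _ hx exz) hp.
Qed.
Lemma connect_map (T1 T2 : finType) (e1 : rel T1) (e2 : rel T2) (f : T1 -> T2) (x y : T1) :
  (forall u v : T1, e1 u v -> e2 (f u) (f v)) -> connect e1 x y -> connect e2 (f x) (f y).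
Proof.
move=> h /connectP [p hp ->]; apply/connectP; exists (map f p); last by rewrite last_map.
by elim: p x hp => //= z p IH x /andP [h1 h2]; rewrite h // IH.
Qed.

Lemma canon_sub X : canon X \subset X.
Proof. by apply/subsetP => i; rewrite inE => /andP []. Qed.

Lemma canon_eq (X S : {set 'I_n}) : S \subset X ->
  (forall i, i \in X -> i \notin S ->
     dot lam (alpha i) = 0 /\ forall k, k \in S -> dot (alpha k) (alpha i) = 0) ->
  (forall i, i \in S -> exists j, [/\ j \in S, 0 < dot lam (alpha j) & connect (radj S) i j]) ->
  canon X = S.
Proof.
move=> hSX h1 h2; apply/setP => i; apply/idP/idP.
  rewrite inE => /andP [hiX /existsP [j /and3P [hjX hj hc]]].
  have hjS : j \in S.
    apply: contraT => hn; have [h0 _] := h1 j hjX hn; by rewrite h0 ltxx in hj.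
  have hcl : forall u v : 'I_n, u \in S -> radj X u v -> v \in S.
    move=> u v hu /and3P [_ hv /andP [uv duv]]; apply: contraT => hn.
    have [_ h] := h1 v hv hn; by rewrite h ?eqxx in duv.
  apply: (connect_closed_in hcl hjS).
  by rewrite radj_csym.
move=> hiS; have [j [hjS hj hc]] := h2 i hiS.
rewrite inE (subsetP hSX _ hiS) /=; apply/existsP; exists j.
rewrite (subsetP hSX _ hjS) hj /=.
apply: (@connect_map _ _ _ _ id) hc => u v /and3P [hu hv ha].
by rewrite /radj /= (subsetP hSX _ hu) (subsetP hSX _ hv).
Qed.

Lemma seq_argmin (T : eqType) (r : seq T) (g : T -> R) : r != [::] ->
  exists2 x : T, x \in r & forall y : T, y \in r -> g x <= g y.
Proof.
elim: r => // a r IH _; case: (eqVneq r [::]) => [->|nr].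
  by exists a; rewrite ?mem_head // => y; rewrite mem_seq1 => /eqP ->.
have [x hx hmin] := IH nr.
case: (leP (g a) (g x)) => h.
  exists a; first exact: mem_head.
  move=> y; rewrite in_cons => /orP [/eqP ->|hy] //; apply: le_trans h (hmin y hy).
exists x; first by rewrite in_cons hx orbT.
by move=> y; rewrite in_cons => /orP [/eqP ->|hy]; [exact: ltW | exact: hmin].
Qed.

Lemma S1_conn Z i : i \in S1 Z ->
  exists j, [/\ j \in S1 Z, 0 < dot lam (alpha j) & connect (radj (S1 Z)) i j].
Proof.
move=> hi; apply: NNPP => H.
set S := S1 Z.
set C : {set 'I_n} := [set k | connect (radj S) i k].
have hiC : i \in C by rewrite inE connect0.
have hCS : forall k, k \in C -> k \in S.
  move=> k; rewrite inE => hk; apply: (connect_closed_in _ hi hk).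
  by move=> u v _ /and3P [_ -> _].
have hCK : forall k, k \in C -> dot lam (alpha k) = 0.
  move=> k hk; apply/eqP; rewrite eq_le (lam_dom k) andbT leNgt; apply/negP => hp.
  apply: H; exists k; split => //; [exact: hCS | by move: hk; rewrite inE].
have hCorth : forall k l, k \in C -> l \in S -> l \notin C -> dot (alpha k) (alpha l) = 0.
  move=> k l hk hl hn.
  have kl : k != l by apply: contraNneq hn => <-.
  apply/eqP; apply: contraNT hn => hd.
  rewrite inE; move: (hk); rewrite inE => hk'; apply: connect_trans hk' _.
  by apply: connect1; rewrite /radj (hCS k hk) hl /adjI kl hd.
pose f := fun v => \sum_(k in C) coord (lam - v) 0 k.
have hf_ge0 : forall v, VZ Z v -> 0 <= f v.
  by move=> v hv; apply: sumr_ge0 => k _; apply: VZ_coord_ge0 hv.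
have [v1 [hv1 hv1i]] : exists v, VZ Z v /\ coord (lam - v) 0 i != 0.
  by move: hi; rewrite inE => /asboolP.
have hfv1 : 0 < f v1.
  rewrite /f (bigD1 i) //=.
  have ha : 0 < coord (lam - v1) 0 i by rewrite lt_def hv1i (VZ_coord_ge0 i hv1).
  have hb : 0 <= \sum_(k in C | k != i) coord (lam - v1) 0 k.
    by apply: sumr_ge0 => k _; apply: VZ_coord_ge0 hv1.
  lra.
set Wl := [seq v <- enumV Z | 0 < f v].
have hWl : Wl != [::].
  apply/eqP => e; have : v1 \in Wl by rewrite mem_filter hfv1 /=; apply/enumVP.
  by rewrite e.
have [v0 hv0W hmin] := seq_argmin f hWl.
move: hv0W; rewrite mem_filter => /andP [hfv0 /enumVP hv0].
set q := lam - v0.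
have hqS : forall k, k \notin S -> coord q 0 k = 0.
  by move=> k; case: (VZ_S1 hv0) => _; apply.
set xC := \sum_(k in C) coord q 0 k *: alpha k.
have hkey : forall j, j \in C -> dot v0 (alpha j) = - dot xC (alpha j).
  move=> j hj.
  have e1 : dot v0 (alpha j) = dot lam (alpha j) - dot q (alpha j).
    by rewrite /q dotBl opprB addrC subrK.
  rewrite e1 hCK // sub0r; congr (- _).
  rewrite dot_coord (bigID (fun k => k \in C)) /= [X in _ + X]big1 ?addr0.
    by rewrite /xC dot_suml; apply: eq_bigr => k _; rewrite dotZl.
  move=> k hk; case: (boolP (k \in S)) => hkS; last by rewrite hqS // mul0r.
  by rewrite dotC hCorth // mulr0.
case: (boolP [exists j in C, 0 < dot xC (alpha j)]).
  move=> /existsP [j /andP [hj hxj]].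
  have hjZ : j \in Z by apply: (subsetP (S1_sub Z)); apply: hCS.
  set v1' := refl (alpha j) v0.
  have hv1' : VZ Z v1' by apply: VZ_refl.
  set kk := 2 * dot v0 (alpha j) / dot (alpha j) (alpha j).
  have hkk : kk < 0.
    by rewrite /kk hkey // pmulr_llt0 ?invr_gt0 ?alpha_gt0 // pmulr_rlt0 // oppr_lt0.
  have hf1 : f v1' = f v0 + kk.
    have hs : \sum_(k in C) (j == k)%:R = 1 :> R.
      rewrite (bigD1 j) //= eqxx big1 ?addr0 //.
      by move=> k /andP [_ kj]; rewrite eq_sym (negbTE kj).
    rewrite /f /v1'.
    under eq_bigr => k _ do rewrite coord_sub_refl.
    by rewrite big_split /= -mulr_sumr hs mulr1.
  have hf1ge : 0 <= f v1' by apply: hf_ge0.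
  case: (ltrP 0 (f v1')) => hpos.
    have : v1' \in Wl by rewrite mem_filter hpos /=; apply/enumVP.
    move=> /hmin; rewrite hf1; lra.
  have hf0 : f v1' = 0 by apply/eqP; rewrite eq_le hpos hf1ge.
  have := psumr_eq0P (fun k _ => VZ_coord_ge0 k hv1') hf0 => hz.
  have hqj : coord q 0 j = - kk.
    have := hz j hj; rewrite /v1' coord_sub_refl eqxx mulr1 -/q -/kk => e; lra.
  have hqk : forall k, k \in C -> k != j -> coord q 0 k = 0.
    move=> k hk kj; have := hz k hk.
    by rewrite coord_sub_refl eq_sym (negbTE kj) mulr0 addr0.
  have exC : xC = coord q 0 j *: alpha j.
    rewrite /xC (bigD1 j) //= big1 ?addr0 // => k /andP [hk kj].
    by rewrite hqk // scale0r.
  have ekk : kk = - 2 * coord q 0 j.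
    rewrite /kk hkey // exC dotZl; move: (alpha_nz j) => nz; field; exact: nz.
  have hq0 : coord q 0 j = 0 by lra.
  have : f v0 = 0.
    rewrite /f (bigD1 j) //= -/q hq0 add0r big1 // => k /andP [hk kj]; exact: hqk.
  lra.
rewrite negb_exists => /forallP hall.
have hle : forall j, j \in C -> dot xC (alpha j) <= 0.
  by move=> j hj; have := hall j; rewrite hj /= -leNgt.
have hxx : dot xC xC <= 0.
  rewrite {1}/xC dot_suml; apply: sumr_le0 => k hk; rewrite dotZl dotC.
  apply: mulr_ge0_le0; [exact: VZ_coord_ge0 hv0 | exact: hle].
have hx0 : xC = 0.
  by apply/eqP; rewrite -dot_eq0 eq_le hxx dot_ge0.
have hcx : forall k, k \in C -> coord q 0 k = 0.
  move=> k hk.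
  have : coord xC 0 k = coord q 0 k.
    rewrite /xC big_mkcond /=.
    rewrite (eq_bigr (fun l => (if l \in C then coord q 0 l else 0) *: alpha l)); last first.
      by move=> l _; case: ifP => _ //; rewrite scale0r.
    by rewrite sum_coord mxE hk.
  by rewrite hx0 coord0 mxe0.
have : f v0 = 0 by rewrite /f big1 // => k hk; exact: hcx.
lra.
Qed.

Lemma canonZ Z : canon Z = S1 Z.
Proof.
apply: canon_eq; [exact: S1_sub | | exact: S1_conn].
by move=> i hi hn; apply: sZ_zero => //; exact: sZ_fix.
Qed.
Lemma canon_sZ Z : canon (Zc (sZ Z)) = S1 Z.
Proof.
apply: canon_eq; last exact: S1_conn.
  apply/subsetP => k hk; rewrite inE sZ_fix //; exact: (subsetP (S1_sub Z)).
by move=> i; rewrite inE => /eqP h hn; exact: sZ_zero.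
Qed.
Lemma VZ_canon Z v : VZ Z v <-> VZ (canon Z) v.
Proof.
rewrite canonZ; split; first exact: VZ_S1.
by apply: VZ_mono; exact: S1_sub.
Qed.

Definition dws x : seq 'I_n :=
  proj1_sig (ClassicalEpsilon.constructive_indefinite_description _ (exists_dom x)).
Definition domrep x := sw (dws x) x.
Lemma domrep_dom x : domi (domrep x).
Proof. exact: (proj2_sig (ClassicalEpsilon.constructive_indefinite_description _ (exists_dom x))). Qed.
Lemma domrep_id x : domi x -> domrep x = x.
Proof. by move=> hx; apply: dom_unique hx (domrep_dom x). Qed.
Lemma domrep_W s x : domrep (sw s x) = domrep x.
Proof.
have e : sw (dws (sw s x) ++ s ++ rev (dws x)) (domrep x) = domrep (sw s x).
  by rewrite /domrep !sw_cat sw_revK.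
rewrite -e dom_unique //; first exact: domrep_dom.
by rewrite e; apply: domrep_dom.
Qed.

Definition phi (F : vec -> Prop) : {set option 'I_n} :=
  None |: [set Some i | i in canon (Zc (domrep (sigm F)))].

Lemma ext_adj_sym : symmetric (ext_adj alpha lam).
Proof. by case=> [i|] [j|] //=; rewrite eq_sym dotC. Qed.

Lemma connect_restrict (T : finType) (e : rel T) (a : {set T}) (x y : T) :
  (forall u v : T, u \in a -> e u v -> v \in a) -> x \in a -> connect e x y ->
  connect (fun u v : T => [&& u \in a, v \in a & e u v]) x y.
Proof.
move=> h hx /connectP [p hp ->]; apply/connectP; exists p => //.
elim: p x hx hp => //= z p IH x hx /andP [exz hp].
have hz := h _ _ hx exz; rewrite hx hz exz /=; exact: IH.
Qed.

Lemma phi_conn (X : {set 'I_n}) : connected_sub (ext_adj alpha lam) (None |: [set Some i | i in canon X]).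
Proof.
set T := None |: _.
pose eT := fun u v : option 'I_n => [&& u \in T, v \in T & ext_adj alpha lam u v].
have symT : connect_sym eT.
  apply: sym_connect_sym => u v; rewrite /eT ext_adj_sym.
  by case: (u \in T); case: (v \in T).
have hcl : forall u v : 'I_n, u \in canon X -> radj X u v -> v \in canon X.
  move=> u v; rewrite !inE => /andP [hu /existsP [j /and3P [hjX hj hc]]] huv.
  move: (huv) => /and3P [_ hv _]; rewrite hv /=; apply/existsP; exists j.
  rewrite hjX hj /=; apply: connect_trans hc.
  by apply: connect1; rewrite radj_sym.
have hN : forall x : option 'I_n, x \in T -> connect eT x None.
  case=> [i|] hx; last exact: connect0.
  have hi : i \in canon X by move: hx; rewrite in_setU1 /= (mem_imset _ _ (@Some_inj _)).
  move: (hi); rewrite inE => /andP [hiX /existsP [j /and3P [hjX hj hc]]].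
  have hjc : j \in canon X.
    by rewrite inE hjX /=; apply/existsP; exists j; rewrite hjX hj connect0.
  apply: (connect_trans (y := Some j)).
    have := connect_restrict hcl hi hc.
    apply: (@connect_map _ _ _ _ Some) => u v /and3P [hu hv /and3P [_ _ ha]].
    by rewrite /eT /T !in_setU1 /= !(mem_imset _ _ (@Some_inj _)) hu hv; exact: ha.
  apply: connect1; rewrite /eT /T /= hj andbT !in_setU1 eqxx /=.
  by rewrite (mem_imset _ _ (@Some_inj _)) andbT.
move=> x y hx hy; apply: (connect_trans (y := None)); first exact: hN.
by rewrite symT; apply: hN.
Qed.

Lemma conn_canon (S : {set option 'I_n}) : None \in S -> connected_sub (ext_adj alpha lam) S ->
  canon [set i | Some i \in S] = [set i | Some i \in S] /\
  S = None |: [set Some i | i in [set i | Some i \in S]].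
Proof.
move=> hS hc; set X := [set i | Some i \in S].
pose eS := fun u v : option 'I_n => [&& u \in S, v \in S & ext_adj alpha lam u v].
have key : forall (p : seq (option 'I_n)) (i : 'I_n), path eS (Some i) p -> None = last (Some i) p ->
    exists j, [&& j \in X, 0 < dot lam (alpha j) & connect (radj X) i j].
  elim=> [|y p IH] i //= /andP [hy hp] hl.
  move: hy => /and3P [hiS hyS ha].
  case: y ha hyS hp hl => [k|] ha hyS hp hl.
    have [j /and3P [hjX hj hcj]] := IH k hp hl.
    exists j; rewrite hjX hj /=; apply: connect_trans hcj.
    by apply: connect1; rewrite /radj !inE hiS hyS.
  by move: ha => /= ha; exists i; rewrite inE hiS ha connect0.
have hcan : canon X = X.
  apply/setP => i; apply/idP/idP; first exact: (subsetP (canon_sub X)).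
  move=> hi; have hiS : Some i \in S by move: hi; rewrite inE.
  have := hc _ _ hiS hS.
  move=> /connectP [p hp hl]; have [j hj] := key p i hp hl.
  by rewrite inE hi /=; apply/existsP; exists j.
split => //; apply/setP => [[i|]]; last by rewrite !inE eqxx hS.
by rewrite !in_setU1 /= (mem_imset _ _ (@Some_inj _)) inE.
Qed.

Lemma phi_inj (X Y : {set 'I_n}) : None |: [set Some i | i in X] = None |: [set Some i | i in Y] -> X = Y.
Proof.
move=> e; apply/setP => i; have := congr1 (fun A : {set option 'I_n} => Some i \in A) e.
by rewrite !in_setU1 /= !(mem_imset _ _ (@Some_inj _)).
Qed.

Lemma face_std F : nonempty_face (weight_polytope Phi lam) F ->
  exists s c1, [/\ domi c1, (forall x, Fc c1 x <-> img s F x) & domrep (sigm F) = sZ (Zc c1)].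
Proof.
case=> _ [c hc].
have hF : forall x, F x <-> Fc c x.
  move=> x; rewrite hc /Fc; split => [[h1 h2]|[h1 h2]]; split.
  - by apply/Pol_iff.
  - by move=> y /Pol_iff; apply: h2.
  - by apply/Pol_iff.
  - by move=> y /Pol_iff; apply: h2.
have [s hs] := exists_dom c.
exists s, (sw s c); split => //.
  move=> x; rewrite img_Fc; split; case=> y [hy ->]; exists y; split => //; by apply/hF.
have e1 : sigm (img s F) = sigm (Fc (sw s c)).
  apply: sigm_ext => x; rewrite img_Fc; split; case=> y [hy ->]; exists y; split => //; by apply/hF.
rewrite -(domrep_W s) -sigm_img e1 sigm_Fc //.
exact: domrep_id (sZ_dom _).
Qed.

Lemma Fc_S1 c x : domi c -> (Fc c x <-> conv (VZ (S1 (Zc c))) x).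
Proof.
move=> hc; rewrite Fc_conv //; split; apply: conv_mono => y.
  exact: VZ_S1.
by apply: VZ_mono; apply: S1_sub.
Qed.

Lemma solve_dot (f : 'I_n -> R) : exists c, forall i, dot c (alpha i) = f i.
Proof.
exists (invmx Amx *m \col_j f j)^T => i.
rewrite dotC /dot trmxK.
have -> : alpha i = row i Amx by rewrite rowK.
rewrite -row_mul mulmxA mulmxV ?Amx_unit // mul1mx !mxE //.
Qed.

Theorem main_thm :
  exists phi : ('rV[R]_n -> Prop) -> {set option 'I_n},
    [/\ (forall F, nonempty_face (weight_polytope Phi lam) F ->
           None \in phi F /\ connected_sub (ext_adj alpha lam) (phi F)),
        (forall F G, nonempty_face (weight_polytope Phi lam) F ->
           nonempty_face (weight_polytope Phi lam) G ->
           (phi F = phi G <-> same_W_orbit Phi F G)) &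
        (forall S : {set option 'I_n}, None \in S ->
           connected_sub (ext_adj alpha lam) S ->
           exists F, nonempty_face (weight_polytope Phi lam) F /\ phi F = S)].
Proof.
exists phi; split.
- move=> F _; split; first by rewrite /phi setU11.
  exact: phi_conn.
- move=> F G hF hG; split.
    move=> e.
    have [s1 [c1 [hc1 h1 e1]]] := face_std hF.
    have [s2 [c2 [hc2 h2 e2]]] := face_std hG.
    have eS : S1 (Zc c1) = S1 (Zc c2).
      by move: e; rewrite /phi e1 e2 (canon_sZ (Zc c1)) (canon_sZ (Zc c2)) => /phi_inj.
    have hFG : forall x, img s1 F x <-> img s2 G x.
      by move=> x; rewrite -h1 -h2 !Fc_S1 // eS.
    exists (sw (rev s2 ++ s1)); split; first exact: sw_weyl.
    move=> x; split.
      move=> hx; have : img s2 G (sw s2 x) by exists x.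
      move/hFG => [y [hy e']]; exists y; split => //.
      by rewrite sw_cat -e' sw_revK.
    case=> y [hy ->]; have : img s1 F (sw s1 y) by exists y.
    move/hFG => [z [hz e']]; by rewrite sw_cat e' sw_revK.
  case=> w [hw hG']; have [t ht] := weyl_sw hw.
  have e : sigm G = sw t (sigm F).
    rewrite -sigm_img; apply: sigm_ext => x; rewrite hG'.
    by split; case=> y [hy ->]; exists y; rewrite ht.
  by rewrite /phi e domrep_W.
- move=> S hS hconn; set X := [set i | Some i \in S].
  have [hcan eS] := conn_canon hS hconn.
  have [c hc] := solve_dot (fun i => if i \in X then 0 else 1).
  have hcdom : domi c by move=> i; rewrite hc; case: ifP.
  have hZ : Zc c = X.
    by apply/setP => i; rewrite inE hc; case: ifP => _; rewrite ?eqxx ?oner_eq0.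
  pose F := fun x => weight_polytope Phi lam x /\
                     forall y, weight_polytope Phi lam y -> dot c y <= dot c x.
  have hF : forall x, F x <-> Fc c x.
    move=> x; rewrite /F /Fc; split => [[h1 h2]|[h1 h2]]; split.
    - by apply/Pol_iff.
    - by move=> y /Pol_iff; apply: h2.
    - by apply/Pol_iff.
    - by move=> y /Pol_iff; apply: h2.
  exists F; split.
    split; last by exists c.
    by exists lam; apply/hF; apply/Fc_dom => //; split => //; exact: Pol_lam.
  have e : sigm F = sZ X by rewrite (sigm_ext hF) sigm_Fc // hZ.
  rewrite /phi e domrep_id; last exact: sZ_dom.
  have hh : canon (Zc (sZ X)) = X by rewrite canon_sZ -canonZ hcan.
  by rewrite hh; symmetry.
Qed.
End Roots.

Theorem theoremD (R : realType) (n : nat) (Phi : seq 'rV[R]_n)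
    (alpha : 'I_n -> 'rV[R]_n) (lam : 'rV[R]_n) :
  (0 < n)%N ->
  is_irred_reduced_root_system Phi ->
  is_base Phi alpha ->
  dominant_integral alpha lam ->
  exists phi : ('rV[R]_n -> Prop) -> {set option 'I_n},
    [/\ (forall F, nonempty_face (weight_polytope Phi lam) F ->
           None \in phi F /\ connected_sub (ext_adj alpha lam) (phi F)),
        (forall F G, nonempty_face (weight_polytope Phi lam) F ->
           nonempty_face (weight_polytope Phi lam) G ->
           (phi F = phi G <-> same_W_orbit Phi F G)) &
        (forall S : {set option 'I_n}, None \in S ->
           connected_sub (ext_adj alpha lam) S ->
           exists F, nonempty_face (weight_polytope Phi lam) F /\ phi F = S)].
Proof. by move=> _ HR HB HD; exact: main_thm. Qed.
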